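(* For any adversary $\mathsf{A}$ against the IND-CPA security of CTRU.PKE, there exist adversaries $\mathsf{B}$ and $\mathsf{C}$ (with the same running time as $\mathsf{A}$) such that $$\mathbf{Adv}^{\text{IND-CPA}}_{\text{CTRU.PKE}}(\mathsf{A})\le\mathbf{Adv}^{\text{NTRU}}_{\mathcal{R}_q,\Psi_1}(\mathsf{B})+\mathbf{Adv}^{\text{RLWE}}_{\mathcal{R}_q,\Psi_2}(\mathsf{C}).$$
   Context: $n$ is a positive integer of the form $3^l2^e$ divisible by $8$; $\mathcal{R}_q=\mathbb{Z}_q[x]/(x^n-x^{n/2}+1)$; $q,q_2$ positive integers with $q_2<q$, $\gcd(q,2)=1$; $\Psi_1,\Psi_2$ distributions over $\mathbb{Z}[x]/(x^n-x^{n/2}+1)$. $\lfloor x\rceil$ is coefficient-wise rounding to the nearest integer. Message space $\mathcal{M}=\{0,1\}^{n/2}$. $\mathrm{PolyEncode}(m)$: with $\mathbf{H}$ the $4\times8$ binary matrix with rows $(1,1,1,1,0,0,0,0)$, $(0,0,1,1,1,1,0,0)$, $(0,0,0,0,1,1,1,1)$, $(0,1,0,1,0,1,0,1)$, split $m$ into quadruples $\mathbf{k}_i=(m_{4i},\dots,m_{4i+3})$ and set coefficients $8i,\dots,8i+7$ to $\frac{q}{2}(\mathbf{k}_i\mathbf{H}\bmod2)$. CTRU.PKE: KeyGen: $f',g\leftarrow\Psi_1$, $f:=2f'+1$; restart if $f$ is not invertible in $\mathcal{R}_q$; $h:=g/f\in\mathcal{R}_q$; $pk=h$, $sk=f$.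 Enc$(h,m)$: $r,e\leftarrow\Psi_2$; $\sigma:=hr+e$; $c:=\lfloor\frac{q_2}{q}(\sigma+\lfloor\mathrm{PolyEncode}(m)\rceil)\rceil\bmod q_2$. (Decryption is irrelevant here.) IND-CPA advantage: $\mathbf{Adv}^{\text{IND-CPA}}_{\text{PKE}}(\mathsf{A})=\big|\Pr[b'=b]-\frac12\big|$ in the experiment $(pk,sk)\leftarrow\mathrm{KeyGen}()$; $(m_0,m_1,s)\leftarrow\mathsf{A}(pk)$; $b\xleftarrow{\$}\{0,1\}$; $c^*\leftarrow\mathrm{Enc}(pk,m_b)$; $b'\leftarrow\mathsf{A}(s,c^* )$. NTRU advantage: $\mathbf{Adv}^{\text{NTRU}}_{\mathcal{R}_q,\Psi_1}(\mathsf{B})=|\Pr[\mathsf{B}(h)=1]-\Pr[\mathsf{B}(u)=1]|$ where $h=g/f$ is distributed as the public key above ($g\leftarrow\Psi_1$, $f=2f'+1$ with $f'\leftarrow\Psi_1$, conditioned on $f$ invertible in $\mathcal{R}_q$) and $u$ is uniform in $\mathcal{R}_q$. RLWE advantage: $\mathbf{Adv}^{\text{RLWE}}_{\mathcal{R}_q,\Psi_2}(\mathsf{C})=|\Pr[\mathsf{C}(h,hr+e)=1]-\Pr[\mathsf{C}(h,u)=1]|$ where $h,u$ are uniform in $\mathcal{R}_q$ and $r,e\leftarrow\Psi_2$. *)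

(* Defs.v *)
From HB Require Import structures.
From mathcomp Require Import all_boot all_order all_algebra.
Set Implicit Arguments. Unset Strict Implicit. Unset Printing Implicit Defensive.
Import Order.TTheory GRing.Theory Num.Theory.
Local Open Scope ring_scope.

Definition Phi (q n : nat) : {poly 'Z_q} := 'X^n - 'X^(n %/ 2) + 1.
Notation Rq q n := {poly %/ Phi q n}.

Definition unitq (q n : nat) (f : Rq q n) : bool := [exists y : Rq q n, y * f == 1].
Definition invq (q n : nat) (f : Rq q n) : Rq q n :=
  odflt 0 [pick y : Rq q n | y * f == 1].

Definition msg (n : nat) := {ffun 'I_(n %/ 2) -> bool}.

(* k-th message bit m_k (false if out of range, never used) *)
Definition mbit (n : nat) (m : msg n) (k : nat) : bool :=
  odflt false (omap m (insub k)).

Definition Hmat (a b : nat) : bool :=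
  match a with
  | 0 => (b < 4)%N
  | 1 => (2 <= b < 6)%N
  | 2 => (4 <= b < 8)%N
  | _ => odd b
  end.

(* entry (j mod 8) of k_{j/8} H mod 2, with k_i = (m_{4i},...,m_{4i+3}) *)
Definition encbit (n : nat) (m : msg n) (j : nat) : bool :=
  odd (\sum_(s < 4) (mbit m (4 * (j %/ 8) + s) && Hmat s (j %% 8)))%N.

Definition PolyEncode_coef (q n : nat) (m : msg n) (j : nat) : rat :=
  (q%:R / 2) * (encbit m j)%:R.

Definition round (x : rat) : int := Num.floor (x + 1 / 2).

(* ciphertexts: coefficient vectors with entries in [0, q2) *)
Definition ctxt (n : nat) := {ffun 'I_n -> int}.

(* c := round( q2/q (sigma + round(PolyEncode m)) ) mod q2, where sigma in R_q is
   lifted to its coefficient representative in [0, q) *)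
Definition enc_sigma (q q2 n : nat) (sigma : Rq q n) (m : msg n) : ctxt n :=
  [ffun i : 'I_n =>
     (round ((q2%:R / q%:R) *
        ((nat_of_ord ((val sigma)`_i : 'Z_q))%:R
         + (round (PolyEncode_coef q m i))%:~R)) %% q2%:Z)%Z].

Definition is_distr (R : realFieldType) (T : finType) (p : {ffun T -> R}) : Prop :=
  (forall x, 0 <= p x) /\ \sum_(x : T) p x = 1.

Definition unif (R : realFieldType) (T : finType) : R := (#|T|%:R)^-1.

Section Games.
Variables (R : realFieldType) (q q2 n : nat).
Variables (Psi1 Psi2 : {ffun Rq q n -> R}).

(* KeyGen: f', g <- Psi1, f := 2f'+1, restart unless f invertible; h := g/f.
   Pinv = Pr[2f'+1 invertible]; the output is the conditional distribution. *)
Definition Pinv : R :=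
  \sum_(f' : Rq q n) Psi1 f' * (unitq (2 * f' + 1))%:R.

Definition keygen_pk (f' g : Rq q n) : Rq q n := g * invq (2 * f' + 1).

Definition E_keygen (F : Rq q n -> R) : R :=
  \sum_(f' : Rq q n) \sum_(g : Rq q n)
     (Psi1 f' * Psi1 g * (unitq (2 * f' + 1))%:R / Pinv) * F (keygen_pk f' g).

Variables (S : finType)
  (A1 : Rq q n -> {ffun (msg n * msg n * S) -> R})
  (A2 : S -> ctxt n -> {ffun bool -> R}).

Definition chall (x : msg n * msg n * S) (b : bool) : msg n :=
  if b then x.1.2 else x.1.1.

(* Pr[b' = b | pk = h] in the IND-CPA experiment *)
Definition win_prob (h : Rq q n) : R :=
  \sum_(x : msg n * msg n * S) A1 h x *
    (\sum_(b : bool) 2^-1 *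
       \sum_(r : Rq q n) \sum_(e : Rq q n)
          Psi2 r * Psi2 e * A2 x.2 (enc_sigma q2 (h * r + e) (chall x b)) b).

Definition Adv_INDCPA : R := `| E_keygen win_prob - 2^-1 |.

Definition Adv_NTRU (B : Rq q n -> {ffun bool -> R}) : R :=
  `| E_keygen (fun h => B h true)
     - \sum_(u : Rq q n) unif R (Rq q n) * B u true |.

Definition Adv_RLWE (C : Rq q n -> Rq q n -> {ffun bool -> R}) : R :=
  `| \sum_(h : Rq q n) \sum_(r : Rq q n) \sum_(e : Rq q n)
        unif R (Rq q n) * Psi2 r * Psi2 e * C h (h * r + e) true
     - \sum_(h : Rq q n) \sum_(u : Rq q n)
        unif R (Rq q n) * unif R (Rq q n) * C h u true |.

(* The black-box reductions: each runs A once (plus one encryption-like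
   computation), hence has the running time of A. *)
(* B(h): run the IND-CPA experiment with pk = h, output [b' = b] *)
Definition ntru_reduction (h : Rq q n) : {ffun bool -> R} :=
  [ffun o : bool => if o then win_prob h else 1 - win_prob h].

(* C(h, sigma): run A on pk = h, use sigma in place of hr+e, output [b' = b] *)
Definition rlwe_win (h sigma : Rq q n) : R :=
  \sum_(x : msg n * msg n * S) A1 h x *
    (\sum_(b : bool) 2^-1 * A2 x.2 (enc_sigma q2 sigma (chall x b)) b).

Definition rlwe_reduction (h sigma : Rq q n) : {ffun bool -> R} :=
  [ffun o : bool => if o then rlwe_win h sigma else 1 - rlwe_win h sigma].

End Games.

(* Main.v *)
Require Import Defs.
From HB Require Import structures.
From mathcomp Require Import all_boot all_order all_algebra.
From mathcomp Require Import ring lra.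
Import Order.TTheory GRing.Theory Num.Theory.
Set Implicit Arguments. Unset Strict Implicit.
Local Open Scope ring_scope.

Definition Fz (q q2 : nat) (t : int) : int :=
  (round ((q2%:R / q%:R) * t%:~R) %% q2%:Z)%Z.

Lemma Fz_per (q q2 : nat) (a b : int) : (0 < q)%N ->
  (a = b %[mod q%:Z])%Z -> Fz q q2 a = Fz q q2 b.
Proof.
move=> q0 /eqP; rewrite eqz_mod_dvd => /dvdzP [j Hj].
have -> : a = b + j * q%:Z by rewrite -Hj addrC subrK.
rewrite /Fz /round.
have -> : (q2%:R / q%:R) * (b + j * q%:Z)%:~R + 1 / 2
   = ((q2%:R / q%:R) * b%:~R + 1/2) + (j * q2%:Z)%:~R :> rat.
  rewrite !rmorphD !rmorphM /= -!pmulrn.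
  have qn0 : (q%:R : rat) != 0 by rewrite pnatr_eq0 -lt0n.
  by field.
rewrite floorDrz ?intr_int // intrKfloor.
by rewrite addrC modzMDl.
Qed.
Lemma dimRq (q n : nat) : (1 < q)%N -> (0 < n)%N ->
  (size (mk_monic (Phi q n))).-1 = n.
Proof.
move=> q1 n0.
have hs : (size ((- 'X^(n %/ 2) + 1)%R : {poly 'Z_q}) < size (('X^n)%R : {poly 'Z_q}))%N.
  rewrite size_polyXn; apply: leq_ltn_trans (size_polyD _ _) _.
  rewrite size_polyN size_polyXn size_poly1 gtn_max /= ltnS.
  by rewrite ltn_Pdiv.
have eP : Phi q n = 'X^n + (- 'X^(n %/ 2) + 1) by rewrite /Phi addrA.
rewrite /mk_monic eP size_addl // size_polyXn /=.
rewrite monicE lead_coefDl // lead_coefXn eqxx.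
by rewrite ltnS n0 /= size_addl // size_polyXn.
Qed.

Definition encz (q q2 n : nat) (s : Rq q n) : ctxt n :=
  [ffun i : 'I_n => Fz q q2 ((nat_of_ord ((val s)`_i : 'Z_q))%:Z)].
Definition kk (q n : nat) (m : msg n) (i : nat) : int := round (PolyEncode_coef q m i).
Definition Dm (q n : nat) (m : msg n) : Rq q n :=
  npolyp _ (\poly_(i < n) (((absz (kk q m i %% q%:Z)%Z)%:R) : 'Z_q)).

Lemma enc_shift (q q2 n : nat) (s : Rq q n) (m : msg n) :
  (1 < q)%N -> (0 < n)%N ->
  enc_sigma q2 s m = encz q2 (s + Dm q m).
Proof.
move=> q1 n0; apply/ffunP => i; rewrite !ffunE.
have -> : (nat_of_ord ((val s)`_i : 'Z_q))%:R + (round (PolyEncode_coef q m i))%:~R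
   = ((nat_of_ord ((val s)`_i : 'Z_q))%:Z + kk q m i)%:~R :> rat.
  by rewrite rmorphD.
rewrite -/(Fz q q2 _); apply: Fz_per; first exact: ltnW.
have -> : val (s + Dm q m) = val s + val (Dm q m) by [].
rewrite coefD /Dm coef_npolyp ifT; last by rewrite dimRq.
rewrite coef_poly ltn_ord.
set x := (val s)`_i.
set N := `|(kk q m i %% q%:Z)%Z|%N.
have -> : nat_of_ord (x + N%:R : 'Z_q) = ((x + N) %% q)%N.
  by rewrite -{1}(natr_Zp x) -natrD val_Zp_nat.
rewrite -modz_nat PoszD /N.
rewrite gez0_abs ?modz_ge0 //; last by rewrite eqz_nat -lt0n ltnW.
by rewrite modzDmr modz_mod.
Qed.

Lemma sum_enc_indep (R : realFieldType) (q q2 n : nat) (G : ctxt n -> R) (m : msg n) :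
  (1 < q)%N -> (0 < n)%N ->
  \sum_(u : Rq q n) G (enc_sigma q2 u m) = \sum_(u : Rq q n) G (encz q2 u).
Proof.
move=> q1 n0.
under eq_bigr do rewrite enc_shift //.
by rewrite [RHS](reindex_inj (addIr (Dm q m))).
Qed.

Lemma unifK (R : realFieldType) (T : finType) (x : T) : unif R T * #|T|%:R = 1.
Proof.
rewrite /unif mulVf // pnatr_eq0 -lt0n; apply/card_gt0P; by exists x.
Qed.

Lemma sum_unif (R : realFieldType) (T : finType) (x : T) : \sum_(t : T) unif R T = 1.
Proof. by rewrite sumr_const -mulr_natr (unifK R x). Qed.

Lemma rlwe_unif (R : realFieldType) (q q2 n : nat) (S : finType)
  (A1 : Rq q n -> {ffun (msg n * msg n * S) -> R})
  (A2 : S -> ctxt n -> {ffun bool -> R}) (h : Rq q n) :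
  (1 < q)%N -> (0 < n)%N ->
  (forall h, is_distr (A1 h)) -> (forall s c, is_distr (A2 s c)) ->
  \sum_(u : Rq q n) unif R (Rq q n) * rlwe_win q2 A1 A2 h u = 2^-1.
Proof.
move=> q1 n0 HA1 HA2.
have key : forall x : msg n * msg n * S,
   \sum_(u : Rq q n) unif R (Rq q n) *
      (\sum_(b : bool) 2^-1 * A2 x.2 (enc_sigma q2 u (chall x b)) b) = 2^-1.
  move=> x.
  rewrite -mulr_sumr exchange_big /=.
  under eq_bigr => b _ do rewrite -mulr_sumr (@sum_enc_indep R q q2 n (fun c => A2 x.2 c b)) //.
  rewrite -mulr_sumr exchange_big /=.
  under eq_bigr do rewrite (proj2 (HA2 _ _)).
  by rewrite sumr_const -mulr_natr mulrCA (unifK R 0) mulr1.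
rewrite /rlwe_win.
under eq_bigr do rewrite mulr_sumr.
rewrite exchange_big /=.
under eq_bigr do (under eq_bigr do rewrite mulrCA; rewrite -mulr_sumr key).
by rewrite -mulr_suml (proj2 (HA1 h)) mul1r.
Qed.

Lemma win_expand (R : realFieldType) (q q2 n : nat) (Psi2 : {ffun Rq q n -> R}) (S : finType)
  (A1 : Rq q n -> {ffun (msg n * msg n * S) -> R})
  (A2 : S -> ctxt n -> {ffun bool -> R}) (h : Rq q n) :
  win_prob q2 Psi2 A1 A2 h =
  \sum_(r : Rq q n) \sum_(e : Rq q n) Psi2 r * Psi2 e * rlwe_win q2 A1 A2 h (h * r + e).
Proof.
rewrite /win_prob /rlwe_win.
under [RHS]eq_bigr do under eq_bigr do rewrite mulr_sumr.
under [RHS]eq_bigr do rewrite exchange_big /=.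
rewrite exchange_big /=; apply: eq_bigr => x _.
under [RHS]eq_bigr do under eq_bigr do rewrite !mulr_sumr.
under [RHS]eq_bigr do rewrite exchange_big /=.
rewrite [RHS]exchange_big /= mulr_sumr; apply: eq_bigr => b _.
rewrite !mulr_sumr; apply: eq_bigr => r _.
rewrite !mulr_sumr; apply: eq_bigr => e _.
ring.
Qed.

Lemma E_keygen_ext (R : realFieldType) (q n : nat) (Psi1 : {ffun Rq q n -> R}) (F G : Rq q n -> R) :
  (forall h, F h = G h) -> E_keygen Psi1 F = E_keygen Psi1 G.
Proof.
move=> FG; rewrite /E_keygen; apply: eq_bigr => f _; apply: eq_bigr => g _.
by rewrite FG.
Qed.

Unset Implicit Arguments.

Theorem theorem4 (R : realFieldType) (l e q q2 : nat)
  (Psi1 Psi2 : {ffun Rq q (3 ^ l * 2 ^ e)%N -> R})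
  (S : finType)
  (A1 : Rq q (3 ^ l * 2 ^ e)%N -> {ffun (msg (3 ^ l * 2 ^ e) * msg (3 ^ l * 2 ^ e) * S) -> R})
  (A2 : S -> ctxt (3 ^ l * 2 ^ e) -> {ffun bool -> R}) :
  (8 %| 3 ^ l * 2 ^ e)%N ->
  (0 < q2)%N -> (q2 < q)%N -> odd q ->
  is_distr Psi1 -> is_distr Psi2 ->
  0 < Pinv Psi1 ->
  (forall h, is_distr (A1 h)) ->
  (forall s c, is_distr (A2 s c)) ->
  exists (B : Rq q (3 ^ l * 2 ^ e)%N -> {ffun bool -> R})
         (C : Rq q (3 ^ l * 2 ^ e)%N -> Rq q (3 ^ l * 2 ^ e)%N -> {ffun bool -> R}),
    B = ntru_reduction q2 Psi2 A1 A2 /\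
    C = rlwe_reduction q2 A1 A2 /\
    Adv_INDCPA q2 Psi1 Psi2 A1 A2 <= Adv_NTRU Psi1 B + Adv_RLWE Psi2 C.
Proof.
move=> _ q20 q2q _ _ _ _ HA1 HA2.
have q1 : (1 < q)%N by apply: leq_ltn_trans q2q.
have n0 : (0 < 3 ^ l * 2 ^ e)%N by rewrite muln_gt0 !expn_gt0.
exists (ntru_reduction q2 Psi2 A1 A2), (rlwe_reduction q2 A1 A2).
split; first by []. split; first by [].
set U := unif R (Rq q (3 ^ l * 2 ^ e)%N).
rewrite /Adv_INDCPA /Adv_NTRU /Adv_RLWE.
rewrite (@E_keygen_ext _ _ _ _ _ (win_prob q2 Psi2 A1 A2)); last by move=> h; rewrite ffunE.
set X := E_keygen _ _.
set Y := \sum_u U * win_prob q2 Psi2 A1 A2 u.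
have e1 : \sum_u unif R (Rq q (3 ^ l * 2 ^ e)) *
       ntru_reduction q2 Psi2 A1 A2 u true = Y.
  by apply: eq_bigr => u _; rewrite ffunE.
have e2 : \sum_h \sum_r \sum_e0
             unif R (Rq q (3 ^ l * 2 ^ e)) * Psi2 r * Psi2 e0 *
             rlwe_reduction q2 A1 A2 h (h * r + e0) true = Y.
  apply: eq_bigr => h _; rewrite win_expand mulr_sumr; apply: eq_bigr => r _.
  rewrite mulr_sumr; apply: eq_bigr => e0 _; rewrite ffunE /U; ring.
have e3 : \sum_h \sum_u
          unif R (Rq q (3 ^ l * 2 ^ e)) * unif R (Rq q (3 ^ l * 2 ^ e)) *
          rlwe_reduction q2 A1 A2 h u true = 2^-1.
  under eq_bigr => h _ do (under eq_bigr do rewrite ffunE /= -mulrA;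
     rewrite -mulr_sumr rlwe_unif //).
  by rewrite -mulr_suml (sum_unif R 0) mul1r.
rewrite e1 e2 e3.
exact: ler_distD.
Qed.
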